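(* Let $\mathcal S$ be a finite nonempty set of positive half-integers (elements of $\tfrac12\mathbb Z_{>0}$), and let $(\rho_{s'})_{s'\in\mathcal S}$ be positive real numbers with $\sum_{s'\in\mathcal S}\rho_{s'}=1$. For $s\in\mathcal S$ define the vacuum energy density $$\mathcal E_0^{(s)}=-\sum_{s'\in\mathcal S}\rho_{s'}\int_{-\infty}^{\infty}\sigma^{(0)}(\lambda)\,\Psi^{(s')}_{2s}(\lambda)\,d\lambda ,\qquad \sigma^{(0)}(\lambda)=\frac{1}{2\cosh(\pi\lambda)} .$$ Then, for every $s\in\mathcal S$, $$\mathcal E_0^{(s)}=-\sum_{s'\in\mathcal S}\rho_{s'}\left(\psi\Big(\frac{s'+s+1}{2}\Big)-\psi\Big(\frac{|s'-s|+1}{2}\Big)\right),$$ where $\psi$ is the Euler digamma function.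
   Context: This is the energy per site of the antiferromagnetic vacuum of a periodic $L_0$-regular $gl(2)$ (XXX) spin chain whose site spins take the values in $\mathcal S$, the value $s'$ occurring with density $\rho_{s'}$ in the repeated motif, the energy being that of the Hamiltonian $H^{(s)}$ built from the transfer matrix with auxiliary space of spin $s$. In the thermodynamic limit under the string hypothesis the vacuum consists of filled seas of $2s'$-strings ($s'\in\mathcal S$) with root densities $\rho_{s'}\sigma^{(0)}(\lambda)$, and the energy per site is given by the integral in the claim. Here, for a positive integer $p$ and $m\in\tfrac12\mathbb Z_{>0}$, $$\Psi^{(m)}_{p}(\lambda)=\sum_{\alpha=-m+\frac12}^{m-\frac12} f_{\alpha+\frac p2}(\lambda),$$ the sum running over $\alpha\in\{-m+\tfrac12,-m+\tfrac32,\dots,m-\tfrac12\}$, where $f_x(\lambda)=\dfrac{2x}{\lambda^2+x^2}$ for real $x\neq0$ and $f_0\equiv0$ (this is the energy contribution of a $2m$-string with real center $\lambda$). *)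

(* Defs.v *)
From Stdlib Require Import Reals Lra List.
From Coquelicot Require Import Coquelicot.
Open Scope R_scope.

(* A positive half-integer s' in (1/2)Z_{>0} is encoded by the positive
   natural number n = 2 s'; its real value is [half n] = n/2. *)
Definition half (n : nat) : R := INR n / 2.

Definition lsum {A : Type} (F : A -> R) (l : list A) : R :=
  fold_right Rplus 0 (map F l).

Definition fx (x lam : R) : R :=
  if Req_EM_T x 0 then 0 else 2 * x / (lam ^ 2 + x ^ 2).

Definition Psi (twom : nat) (p : nat) (lam : R) : R :=
  lsum (fun k : nat => fx (- half twom + / 2 + INR k + INR p / 2) lam)
       (seq 0 twom).

Definition sigma0 (lam : R) : R := / (2 * cosh (PI * lam)).

Definition integral_R (f : R -> R) : R :=
  RInt_gen f (Rbar_locally m_infty) (Rbar_locally p_infty).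

(* vacuum energy density E_0^{(s)}, s = twos/2, spins S encoded by 2s'; note the lower index of Psi is p = 2s = twos *)
Definition E0 (S : list nat) (rho : nat -> R) (twos : nat) : R :=
  - lsum (fun twos' => rho twos' *
            integral_R (fun lam => sigma0 lam * Psi twos' twos lam)) S.

Definition euler_gamma : R :=
  real (Lim_seq (fun n : nat =>
     sum_n (fun k : nat => / INR (S k)) (Nat.pred n) - ln (INR n))).

Definition digamma (x : R) : R :=
  - euler_gamma + Series (fun n : nat => / (INR n + 1) - / (INR n + x)).

(* Main.v *)
Require Import Defs.
From Stdlib Require Import Reals Lra Lia List Psatz.
From Coquelicot Require Import Coquelicot.
Open Scope R_scope.


Definition an (n : nat) : R := INR n + /2.
Lemma an_pos n : 0 < an n.
Proof. unfold an. pose proof (pos_INR n). lra. Qed.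
Lemma an_S n : an (S n) = an n + 1.
Proof. unfold an. rewrite S_INR. lra. Qed.

Lemma sin_an_PI n : sin (an n * PI) = (-1)^n.
Proof.
  induction n.
  - unfold an. simpl. replace ((0 + /2) * PI) with (PI/2) by lra. apply sin_PI2.
  - rewrite an_S, Rmult_plus_distr_r, Rmult_1_l, neg_sin, IHn. simpl. ring.
Qed.
Lemma cos_an_PI n : cos (an n * PI) = 0.
Proof.
  induction n.
  - unfold an. simpl. replace ((0 + /2) * PI) with (PI/2) by lra. apply cos_PI2.
  - rewrite an_S, Rmult_plus_distr_r, Rmult_1_l, neg_cos, IHn. ring.
Qed.

Lemma int_cosh_cos (t : R) (n : nat) :
  is_RInt (fun y => (cosh (t*y) - 1) * cos (an n * y)) 0 PI
    ((-1)^n * (an n * cosh (PI*t) / (an n ^2 + t^2) - / an n)).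
Proof.
  set (a := an n).
  assert (Ha : 0 < a) by apply an_pos.
  assert (Hd : 0 < a^2 + t^2) by nra.
  set (F := fun y => (t * ((exp (t*y) - exp (-(t*y)))/2) * cos (a*y)
                      + a * ((exp (t*y) + exp (-(t*y)))/2) * sin (a*y)) / (a^2+t^2)
                      - sin (a*y) / a).
  assert (H := is_RInt_derive F (fun y => (cosh (t*y) - 1) * cos (a * y)) 0 PI).
  replace ((-1)^n * (a * cosh (PI*t) / (a ^2 + t^2) - / a)) with (minus (F PI) (F 0)).
  apply H.
  - intros y _. unfold F, cosh. auto_derive. auto.
    field. lra.
  - intros y _. apply (@ex_derive_continuous R_AbsRing R_NormedModule). unfold cosh. auto_derive. auto.
  - unfold F, minus, plus, opp; simpl. fold a.
    rewrite !Rmult_0_r, sin_0, cos_0, Ropp_0, exp_0.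
    unfold a. rewrite sin_an_PI, cos_an_PI. fold a.
    unfold cosh. rewrite (Rmult_comm t PI). field. lra.
Qed.

Definition Dk (m : nat) (y : R) := sum_f_R0 (fun n => cos (an n * y)) m.
Definition KK (N : nat) (y : R) := sum_f_R0 (fun m => Dk m y) N.

Lemma Dk_closed m y : 2 * sin (y/2) * Dk m y = sin ((INR m + 1) * y).
Proof.
  induction m.
  - unfold Dk, an; simpl. replace ((0 + /2) * y) with (y/2) by lra.
    replace ((0+1)*y) with (2*(y/2)) by lra. rewrite sin_2a. ring.
  - unfold Dk in *. rewrite tech5, Rmult_plus_distr_l, IHm, an_S, S_INR.
    unfold an.
    set (u := y/2). set (b := (INR m + 1) * y).
    replace ((INR m + / 2 + 1) * y) with (b + u) by (unfold b, u; lra).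
    replace ((INR m + 1 + 1) * y) with (b + 2*u) by (unfold b, u; lra).
    rewrite sin_plus, cos_plus, sin_2a, cos_2a.
    pose proof (sin2_cos2 u). unfold Rsqr in H.
    assert (E : forall L R0 : R, L - R0 = 0 -> L = R0) by (intros; lra).
    apply E.
    transitivity (- sin b * (sin u * sin u + cos u * cos u - 1)). ring.
    rewrite H. ring.
Qed.

Lemma KK_closed N y : 4 * sin (y/2) ^ 2 * KK N y = cos (y/2) - cos ((INR N + 3/2) * y).
Proof.
  induction N.
  - unfold KK. simpl.
    replace (4 * (sin (y/2) * (sin (y/2) * 1)) * Dk 0 y) with (2 * sin (y/2) * (2 * sin (y/2) * Dk 0 y)) by ring.
    rewrite Dk_closed. simpl.
    set (u := y/2).
    replace ((0+1)*y) with (2*u) by (unfold u; lra).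
    replace ((0 + 3/2) * y) with (2*u + u) by (unfold u; lra).
    rewrite cos_plus, sin_2a, cos_2a.
    pose proof (sin2_cos2 u). unfold Rsqr in H.
    assert (E : forall L R0 : R, L - R0 = 0 -> L = R0) by (intros; lra).
    apply E.
    transitivity (cos u * (sin u * sin u + cos u * cos u - 1)). ring.
    rewrite H. ring.
  - unfold KK in *. rewrite tech5, Rmult_plus_distr_l, IHN.
    replace (4 * sin (y/2) ^ 2 * Dk (S N) y) with (2 * sin (y/2) * (2 * sin (y/2) * Dk (S N) y)) by ring.
    rewrite Dk_closed, !S_INR.
    set (u := y/2). set (b := (INR N + 3/2) * y).
    replace ((INR N + 1 + 1) * y) with (b + u) by (unfold b, u; lra).
    replace ((INR N + 1 + 3 / 2) * y) with (b + 2 * u) by (unfold b, u; lra).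
    rewrite sin_plus, cos_plus, sin_2a, cos_2a.
    pose proof (sin2_cos2 u). unfold Rsqr in H.
    assert (E : forall L R0 : R, L - R0 = 0 -> L = R0) by (intros; lra).
    apply E.
    transitivity (cos b * (sin u * sin u + cos u * cos u - 1)). ring.
    rewrite H. ring.
Qed.

Lemma is_RInt_sum_f (F : nat -> R -> R) (v : nat -> R) a b :
  (forall n, is_RInt (F n) a b (v n)) ->
  forall N, is_RInt (fun y => sum_f_R0 (fun n => F n y) N) a b (sum_f_R0 v N).
Proof.
  intros H N. induction N.
  - simpl. apply H.
  - rewrite tech5. apply (is_RInt_plus _ _ _ _ _ _ IHN (H (S N))).
Qed.

Lemma sin_lb_eq v : sin_lb v = v - v^3 / 6 + v^5/120 - v^7/5040.
Proof.
  unfold sin_lb, sin_approx, sin_term. simpl sum_f_R0.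
  replace (INR (Factorial.fact (2*0+1))) with 1 by (simpl; ring).
  replace (INR (Factorial.fact (2*1+1))) with 6 by (simpl; ring).
  replace (INR (Factorial.fact (2*2+1))) with 120 by (rewrite INR_IZR_INZ; reflexivity).
  replace (INR (Factorial.fact (2*3+1))) with 5040 by (rewrite INR_IZR_INZ; reflexivity).
  simpl. field.
Qed.

Lemma sin_ge_third v : 0 <= v <= 2 -> v/3 <= sin v.
Proof.
  intros Hv. pose proof PI_4. pose proof PI_RGT_0.
  assert (Hle : v <= PI). { pose proof (PI_ineq 0) as HP. simpl in HP. unfold tg_alt, PI_tg in HP. simpl in HP. lra. }
  destruct (SIN v (proj1 Hv) Hle) as [H1 _].
  rewrite sin_lb_eq in H1.
  assert (0 <= v^2 <= 4) by nra.
  assert (0 <= v^4/120 - v^6/5040).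
  { replace (v^4/120 - v^6/5040) with (v^2*v^2*(1/120 - v^2/5040)) by field.
    apply Rmult_le_pos. nra. lra. }
  assert (0 <= 2/3 - v^2/6 + v^4/120 - v^6/5040) by lra.
  assert (0 <= v * (2/3 - v^2/6 + v^4/120 - v^6/5040)) by (apply Rmult_le_pos; lra).
  nra.
Qed.

Lemma cosh_even u : cosh (- u) = cosh u.
Proof. unfold cosh. cbv beta. rewrite Ropp_involutive. field. Qed.

Lemma cosh_m1_bound u : 0 <= cosh u - 1 <= u^2 * exp (Rabs u) / 2.
Proof.
  assert (Hc : cosh u = cosh (Rabs u)).
  { destruct (Rcase_abs u). rewrite Rabs_left by lra. now rewrite cosh_even. rewrite Rabs_right by lra. auto. }
  rewrite Hc, <- pow2_abs.
  set (w := Rabs u / 2).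
  assert (Hw : 0 <= w) by (unfold w; pose proof (Rabs_pos u); lra).
  replace (Rabs u) with (w + w) by (unfold w; lra).
  set (z := exp w). set (z' := exp (- w)).
  assert (Hzz : z * z' = 1) by (unfold z, z'; rewrite <- exp_plus; replace (w + - w) with 0 by ring; apply exp_0).
  assert (Hz : 1 <= z) by (unfold z; pose proof (exp_ineq1_le w); lra).
  assert (Hz' : 0 < z') by apply exp_pos.
  assert (E1 : exp (w + w) = z * z) by (unfold z; apply exp_plus).
  assert (E2 : exp (- (w + w)) = z' * z') by (unfold z'; rewrite <- exp_plus; f_equal; ring).
  assert (Hcz : cosh (w + w) = (z*z + z'*z')/2) by (unfold cosh; rewrite E1, E2; auto).
  rewrite Hcz, E1.
  assert (Hk : 1 - 2 * w <= z' * z').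
  { rewrite <- E2. pose proof (exp_ineq1_le (- (w+w))). lra. }
  assert (H1 : z - z' <= 2 * w * z).
  { assert (z * (z - z') <= z * (2 * w * z)).
    { assert (z*z*(1 - 2*w) <= z*z*(z'*z')) by (apply Rmult_le_compat_l; nra).
      nra. }
    nra. }
  assert (H0 : 0 <= z - z') by nra.
  split. nra.
  assert ((z - z')^2 <= (2 * w * z)^2) by (apply pow_incr; lra).
  assert ((z*z + z'*z')/2 - 1 = (z - z')^2 / 2) by (field_simplify; nra).
  nra.
Qed.


Lemma cosh_ge1 u : 1 <= cosh u.
Proof. pose proof (cosh_m1_bound u). lra. Qed.

Lemma exp_le x y : x <= y -> exp x <= exp y.
Proof. intros [H|H]. left; now apply exp_increasing. subst; lra. Qed.

Lemma KK_bound t N y : 0 <= y <= PI ->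
  Rabs ((cosh (t*y) - 1) * KK N y) <= 9 * t^2 * exp (Rabs t * PI).
Proof.
  intros Hy. pose proof PI_4.
  assert (HE : exp (Rabs (t*y)) <= exp (Rabs t * PI)).
  { apply exp_le. rewrite Rabs_mult, (Rabs_right y) by lra.
    apply Rmult_le_compat_l. apply Rabs_pos. lra. }
  pose proof (exp_pos (Rabs t * PI)) as HEp.
  destruct (cosh_m1_bound (t*y)) as [G0 G1].
  destruct (Req_dec y 0) as [->|Hy0].
  { rewrite Rmult_0_r. unfold cosh. rewrite Ropp_0, exp_0.
    replace ((1+1)/2 - 1) with 0 by field. rewrite Rmult_0_l, Rabs_R0.
    apply Rmult_le_pos. nra. lra. }
  assert (Hs : y/6 <= sin (y/2)).
  { pose proof (sin_ge_third (y/2)). lra. }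
  pose proof (KK_closed N y) as HK.
  set (s := sin (y/2)) in *. set (K := KK N y) in *.
  assert (HK2 : 4 * s^2 * Rabs K <= 2).
  { replace (4 * s^2 * Rabs K) with (Rabs (4 * s^2 * K)).
    rewrite HK. pose proof (COS_bound (y/2)). 
    pose proof (COS_bound ((INR N + 3/2)*y)).
    apply Rabs_le. split; lra.
    rewrite !Rabs_mult, (Rabs_right 4) by lra. rewrite <- RPow_abs.
    rewrite (pow2_abs s). auto. }
  assert (HK3 : y^2 * Rabs K <= 18).
  { assert (y^2 <= 36 * s^2) by nra.
    assert (y^2 * Rabs K <= 36 * s^2 * Rabs K) by (apply Rmult_le_compat_r; [apply Rabs_pos|lra]).
    lra. }
  rewrite Rabs_mult, (Rabs_right (cosh (t*y) - 1)) by lra.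
  replace ((t*y)^2) with (t^2 * y^2) in G1 by ring.
  assert (HA : (cosh (t*y) - 1) * Rabs K <= (t^2 * y^2 * exp (Rabs (t*y)) / 2) * Rabs K)
    by (apply Rmult_le_compat_r; [apply Rabs_pos | lra]).
  assert (HB : t^2 * y^2 * exp (Rabs (t*y)) / 2 * Rabs K = (t^2 * exp (Rabs (t*y)) / 2) * (y^2 * Rabs K)) by field.
  assert (HC : (t^2 * exp (Rabs (t*y)) / 2) * (y^2 * Rabs K) <= (t^2 * exp (Rabs (t*y)) / 2) * 18).
  { apply Rmult_le_compat_l. pose proof (exp_pos (Rabs (t*y))). nra. lra. }
  assert (t^2 * exp (Rabs (t*y)) <= t^2 * exp (Rabs t * PI)) by (apply Rmult_le_compat_l; nra).
  lra.
Qed.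

Lemma sum_lin (f g : nat -> R) (a b : R) N :
  sum_f_R0 (fun n => a * f n + b * g n) N = a * sum_f_R0 f N + b * sum_f_R0 g N.
Proof. induction N; simpl. ring. rewrite IHN. ring. Qed.

Lemma sum_scal_l (f : nat -> R) (c : R) N :
  sum_f_R0 (fun n => c * f n) N = c * sum_f_R0 f N.
Proof. induction N; simpl. ring. rewrite IHN. ring. Qed.

Lemma sum_ext (f g : nat -> R) N : (forall n, f n = g n) -> sum_f_R0 f N = sum_f_R0 g N.
Proof. intros H; induction N; simpl; rewrite ?IHN, ?H; auto. Qed.

Definition uu (t : R) (n : nat) : R :=
  (-1)^n * (an n * cosh (PI*t) / (an n ^2 + t^2) - / an n).

Lemma sumU_int t N :
  is_RInt (fun y => (cosh (t*y) - 1) * KK N y) 0 PI (sum_f_R0 (fun m => sum_f_R0 (uu t) m) N).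
Proof.
  eapply is_RInt_ext.
  2: { apply (is_RInt_sum_f (fun m y => sum_f_R0 (fun n => (cosh (t*y) - 1) * cos (an n * y)) m)).
       intros m. apply (is_RInt_sum_f (fun n y => (cosh (t*y) - 1) * cos (an n * y))).
       intros n. apply int_cosh_cos. }
  intros y _. simpl. unfold KK, Dk.
  rewrite <- sum_scal_l. apply sum_ext. intros m. now rewrite sum_scal_l.
Qed.

Lemma alt_inv_cv :
  is_lim_seq (fun N => sum_f_R0 (tg_alt (fun n => / an n)) N) (PI/2).
Proof.
  pose proof Alt_PI_eq as E. unfold Alt_PI in E. destruct exist_PI as [l Hl].
  apply is_lim_seq_Reals in Hl.
  apply (is_lim_seq_scal_l _ 2) in Hl. simpl in Hl.
  replace (PI/2) with (2 * l) by lra.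
  eapply is_lim_seq_ext. 2: exact Hl.
  intros N. simpl. rewrite <- sum_scal_l. apply sum_ext. intros n.
  unfold tg_alt, PI_tg, an. rewrite plus_INR, mult_INR. simpl.
  pose proof (pos_INR n). field. lra.
Qed.

Lemma telescope_series :
  is_series (fun n => / (INR n + 1) - / (INR n + 2)) 1.
Proof.
  unfold is_series. change (is_lim_seq (sum_n (fun n => / (INR n + 1) - / (INR n + 2))) 1).
  apply is_lim_seq_ext with (u := fun N => 1 - / (INR N + 2)).
  { intros N. rewrite sum_n_Reals. symmetry.
    induction N. simpl. field. rewrite tech5, IHN, S_INR. pose proof (pos_INR N). field. lra. }
  assert (Hinv : is_lim_seq (fun N => / (INR N + 2)) 0).
  { replace (Finite 0) with (Rbar_inv p_infty) by auto.
    apply is_lim_seq_inv. 2: discriminate.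
    eapply is_lim_seq_le_p_loc. 2: apply is_lim_seq_INR.
    exists 0%nat. intros; lra. }
  pose proof (is_lim_seq_minus' (fun _ => 1) _ 1 0 (is_lim_seq_const 1) Hinv) as H.
  rewrite Rminus_0_r in H. exact H.
Qed.

Lemma ex_series_inv_sq : ex_series (fun n => / (INR n + 1)^2).
Proof.
  apply (@ex_series_le R_AbsRing R_CompleteNormedModule _ (fun n => 2 * (/ (INR n + 1) - / (INR n + 2)))).
  - intros n. change (norm (/ (INR n + 1)^2)) with (Rabs (/ (INR n + 1)^2)).
    pose proof (pos_INR n).
    rewrite Rabs_right by (apply Rle_ge, Rlt_le, Rinv_0_lt_compat; nra).
    assert (E : 2 * (/ (INR n + 1) - / (INR n + 2)) - / (INR n + 1)^2
               = INR n / ((INR n + 1)^2 * (INR n + 2))) by (field; lra).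
    assert (0 <= INR n / ((INR n + 1)^2 * (INR n + 2))).
    { apply Rmult_le_pos. lra. apply Rlt_le, Rinv_0_lt_compat. nra. }
    lra.
  - apply (@ex_series_scal_l R_AbsRing R_NormedModule 2 (fun n => / (INR n + 1) - / (INR n + 2))). eexists. apply telescope_series.
Qed.

Lemma ex_series_v t : ex_series (fun n => (-1)^n * / (an n * (an n^2 + t^2))).
Proof.
  apply (@ex_series_le R_AbsRing R_CompleteNormedModule _ (fun n => 8 * / (INR n + 1)^2)).
  - intros n. change (norm ((-1)^n * / (an n * (an n^2 + t^2)))) with (Rabs ((-1)^n * / (an n * (an n^2 + t^2)))).
    rewrite Rabs_mult, pow_1_abs, Rmult_1_l.
    pose proof (pos_INR n). pose proof (an_pos n).
    assert (Ha : (INR n + 1)/2 <= an n) by (unfold an; lra).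
    assert (Hp : 0 < an n * (an n^2 + t^2)) by (apply Rmult_lt_0_compat; nra).
    rewrite Rabs_right by (apply Rle_ge, Rlt_le, Rinv_0_lt_compat; lra).
    replace (8 * / (INR n + 1)^2) with (/ ((INR n + 1)^2 / 8)) by (field; lra).
    apply Rinv_le_contravar. nra.
    assert (an n ^ 3 <= an n * (an n^2 + t^2)) by nra.
    assert (((INR n + 1)/2)^3 <= an n ^3) by (apply pow_incr; lra).
    assert ((INR n + 1)^2 / 8 <= ((INR n + 1)/2)^3) by nra.
    lra.
  - apply (@ex_series_scal_l R_AbsRing R_NormedModule 8 (fun n => / (INR n + 1)^2)). apply ex_series_inv_sq.
Qed.

Lemma Rabs_le_inv' x b : Rabs x <= b -> - b <= x <= b.
Proof. intros H. pose proof (Rle_abs x). pose proof (Rle_abs (- x)). rewrite Rabs_Ropp in H1. split; lra. Qed.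

Definition gtm (t : R) (n : nat) : R := an n / (an n ^2 + t^2).

Lemma inv_INR_lim : is_lim_seq (fun n => / INR n) 0.
Proof.
  replace (Finite 0) with (Rbar_inv p_infty) by auto.
  apply is_lim_seq_inv. apply is_lim_seq_INR. discriminate.
Qed.

Theorem ML t : is_lim_seq (fun N => sum_f_R0 (tg_alt (gtm t)) N) (PI / (2 * cosh (PI * t))).
Proof.
  set (C := cosh (PI*t)).
  assert (HC : 1 <= C) by apply cosh_ge1.
  set (v := fun n => (-1)^n * / (an n * (an n^2 + t^2))).
  assert (Hv : is_lim_seq (fun N => sum_f_R0 v N) (Series v)).
  { pose proof (Series_correct _ (ex_series_v t)) as H. fold v in H.
    eapply is_lim_seq_ext. 2: exact H. intros N. apply sum_n_Reals. }
  pose proof alt_inv_cv as Hinv.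
  set (L0 := (C - 1) * (PI/2) + (- (C * t^2)) * Series v).
  assert (HU : is_lim_seq (fun N => sum_f_R0 (uu t) N) L0).
  { apply is_lim_seq_ext with
      (u := fun N => (C - 1) * sum_f_R0 (tg_alt (fun n => / an n)) N + (- (C * t^2)) * sum_f_R0 v N).
    { intros N. rewrite <- sum_lin. apply sum_ext. intros n.
      unfold uu, tg_alt, v. fold C. pose proof (an_pos n).
      assert (0 < an n ^2 + t^2) by nra. field. lra. }
    apply is_lim_seq_plus'.
    apply (is_lim_seq_scal_l _ _ (PI/2)). exact Hinv.
    apply (is_lim_seq_scal_l _ _ (Series v)). exact Hv. }
  set (B := 9 * t^2 * exp (Rabs t * PI)).
  assert (HB : 0 <= B). { unfold B. pose proof (exp_pos (Rabs t * PI)). nra. }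
  assert (Hbound : forall N, Rabs (sum_f_R0 (fun m => sum_f_R0 (uu t) m) N) <= PI * B).
  { intros N. pose proof (sumU_int t N) as H.
    pose proof PI_RGT_0.
    replace (PI * B) with ((PI - 0) * B) by ring.
    assert (Hb : forall y, 0 <= y <= PI -> norm ((cosh (t*y) - 1) * KK N y) <= B).
    { intros y Hy. apply KK_bound. lra. }
    exact (norm_RInt_le_const _ 0 PI _ B (Rlt_le _ _ H0) Hb H). }
  assert (HCes := Cesaro_1 _ _ (proj1 (is_lim_seq_Reals _ _) HU)).
  apply is_lim_seq_Reals in HCes.
  assert (Hz : is_lim_seq (fun n => sum_f_R0 (fun N => sum_f_R0 (uu t) N) (Init.Nat.pred n) / INR n) 0).
  { apply is_lim_seq_le_le_loc with (u := fun n => (- (PI*B)) * / INR n) (w := fun n => (PI*B) * / INR n).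
    - exists 1%nat. intros n Hn.
      assert (HnP : 0 < INR n) by (apply lt_0_INR; lia).
      pose proof (Hbound (Init.Nat.pred n)) as Hb.
      unfold Rdiv. apply Rabs_le_inv' in Hb.
      pose proof (Rinv_0_lt_compat _ HnP).
      split; apply Rmult_le_compat_r; lra.
    - replace (Finite 0) with (Rbar_mult (- (PI*B)) 0) by (simpl; f_equal; ring).
      apply is_lim_seq_scal_l, inv_INR_lim.
    - replace (Finite 0) with (Rbar_mult (PI*B) 0) by (simpl; f_equal; ring).
      apply is_lim_seq_scal_l, inv_INR_lim. }
  assert (HL0 : L0 = 0).
  { apply is_lim_seq_unique in HCes. apply is_lim_seq_unique in Hz.
    rewrite HCes in Hz. now injection Hz. }
  apply is_lim_seq_ext with
    (u := fun N => / C * (sum_f_R0 (uu t) N + sum_f_R0 (tg_alt (fun n => / an n)) N)).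
  { intros N. 
    replace (sum_f_R0 (uu t) N + sum_f_R0 (tg_alt (fun n => / an n)) N)
      with (1 * sum_f_R0 (uu t) N + 1 * sum_f_R0 (tg_alt (fun n => / an n)) N) by ring.
    rewrite <- sum_lin, <- sum_scal_l. apply sum_ext. intros n.
    unfold uu, tg_alt, gtm. fold C. pose proof (an_pos n).
    assert (0 < an n ^2 + t^2) by nra. field. split; lra. }
  replace (PI / (2 * C)) with (/ C * (L0 + PI/2)) by (rewrite HL0; field; lra).
  apply (is_lim_seq_scal_l _ (/ C) (L0 + PI/2)).
  apply is_lim_seq_plus'. exact HU. exact Hinv.
Qed.


Definition psum (f : nat -> R) (N : nat) : R :=
  match N with O => 0 | S k => sum_f_R0 f k end.

Lemma psum_S f N : psum f (S N) = psum f N + f N.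
Proof. destruct N; simpl. ring. reflexivity. Qed.

Definition Lt (t : R) := PI / (2 * cosh (PI * t)).

Lemma gt_le_inv t n : 0 <= gtm t n <= / an n.
Proof.
  unfold gtm. pose proof (an_pos n).
  split. apply Rmult_le_pos. lra. apply Rlt_le, Rinv_0_lt_compat. nra.
  apply Rmult_le_reg_l with (an n ^2 + t^2). nra.
  field_simplify; try lra; try nra.
  apply Rmult_le_reg_r with (an n). lra. field_simplify; nra.
Qed.

Lemma sum_shift (f : nat -> R) N k :
  sum_f_R0 (tg_alt f) (N + k) = psum (tg_alt f) N + (-1)^N * sum_f_R0 (tg_alt (fun i => f (N + i)%nat)) k.
Proof.
  induction k.
  - rewrite Nat.add_0_r. simpl. change (sum_f_R0 (tg_alt f) N) with (psum (tg_alt f) (S N)). rewrite psum_S. unfold tg_alt. rewrite Nat.add_0_r. simpl. ring.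
  - rewrite Nat.add_succ_r, tech5, IHk, tech5. unfold tg_alt.
    rewrite <- Nat.add_succ_r, pow_add. ring.
Qed.

Lemma tail_small t N : Rabs t <= an N ->
  Rabs (Lt t - psum (tg_alt (gtm t)) N) <= / an N.
Proof.
  intros Ht.
  set (w := fun i => gtm t (N + i)%nat).
  assert (Hdec : Un_decreasing w).
  { intros i. unfold w, gtm. rewrite Nat.add_succ_r, an_S.
    set (a := an (N+i)).
    assert (HaN : an N <= a) by (unfold a, an; rewrite plus_INR; pose proof (pos_INR i); lra).
    pose proof (an_pos N).
    assert (t^2 <= a^2). { rewrite <- (pow2_abs t). apply pow_incr. split. apply Rabs_pos. lra. }
    apply Rmult_le_reg_l with (((a+1)^2 + t^2) * (a^2 + t^2)). nra.
    field_simplify; try nra. }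
  assert (Hcv : Un_cv w 0).
  { apply is_lim_seq_Reals.
    apply is_lim_seq_le_le_loc with (u := fun _ => 0) (w := fun i => / INR i).
    - exists 1%nat. intros i Hi. unfold w. destruct (gt_le_inv t (N+i)) as [G0 G1].
      split. lra. eapply Rle_trans. exact G1. apply Rinv_le_contravar. apply lt_0_INR; lia.
      unfold an. rewrite plus_INR. pose proof (pos_INR N). lra.
    - apply is_lim_seq_const.
    - apply inv_INR_lim. }
  destruct (alternated_series w Hdec Hcv) as [l Hl].
  pose proof (alternated_series_ineq w l 0 Hdec Hcv Hl) as Hineq.
  simpl in Hineq. unfold tg_alt in Hineq. simpl in Hineq.
  pose proof (Hdec 0%nat) as Hd0.
  assert (Heq : Lt t = psum (tg_alt (gtm t)) N + (-1)^N * l).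
  { pose proof (ML t) as HM. apply (is_lim_seq_incr_n _ N) in HM.
    apply is_lim_seq_Reals in Hl.
    apply (is_lim_seq_scal_l _ ((-1)^N)) in Hl.
    apply (is_lim_seq_plus' (fun _ => psum (tg_alt (gtm t)) N) _ _ _ (is_lim_seq_const _)) in Hl.
    apply is_lim_seq_unique in HM. apply is_lim_seq_unique in Hl.
    assert (E : Lim_seq (fun n => sum_f_R0 (tg_alt (gtm t)) (n + N)) =
                Lim_seq (fun n => psum (tg_alt (gtm t)) N + (-1)^N * sum_f_R0 (tg_alt w) n)).
    { apply Lim_seq_ext. intros n. rewrite Nat.add_comm. apply sum_shift. }
    rewrite E, Hl in HM. simpl in HM. unfold Lt. injection HM. intros; lra. }
  rewrite Heq. replace (psum (tg_alt (gtm t)) N + (-1) ^ N * l - psum (tg_alt (gtm t)) N) with ((-1)^N * l) by ring.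
  rewrite Rabs_mult, pow_1_abs, Rmult_1_l.
  unfold w in Hineq. rewrite Nat.add_0_r in Hineq.
  destruct (gt_le_inv t N).
  unfold w in Hd0. rewrite Nat.add_0_r in Hd0. rewrite Rabs_right; lra.
Qed.

Lemma gt_le_half t n : 0 < Rabs t -> gtm t n <= / (2 * Rabs t).
Proof.
  intros Ht. unfold gtm. pose proof (an_pos n).
  rewrite <- (pow2_abs t). set (b := Rabs t) in *.
  apply Rmult_le_reg_l with ((an n ^2 + b^2) * (2*b)). apply Rmult_lt_0_compat; nra.
  field_simplify; try (intro; nra). pose proof (pow2_ge_0 (an n - b)). nra.
Qed.

Lemma psum_bound t N : 0 < Rabs t -> Rabs (psum (tg_alt (gtm t)) N) <= INR N / (2 * Rabs t).
Proof.
  intros Ht. induction N.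
  - simpl. rewrite Rabs_R0. unfold Rdiv. rewrite Rmult_0_l. lra.
  - rewrite psum_S, S_INR.
    eapply Rle_trans. apply Rabs_triang.
    change (tg_alt (gtm t) N) with ((-1)^N * gtm t N). rewrite Rabs_mult, pow_1_abs, Rmult_1_l.
    destruct (gt_le_inv t N).
    rewrite (Rabs_right (gtm t N)) by lra.
    pose proof (gt_le_half t N Ht).
    replace ((INR N + 1) / (2 * Rabs t)) with (INR N / (2 * Rabs t) + / (2 * Rabs t)) by (field; lra).
    lra.
Qed.

Lemma Lt_bound t : 0 < Lt t <= 2.
Proof.
  unfold Lt. pose proof (cosh_ge1 (PI*t)). pose proof PI_4. pose proof PI_RGT_0.
  split. apply Rdiv_lt_0_compat; lra.
  apply Rmult_le_reg_l with (2 * cosh (PI*t)). lra.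
  field_simplify; lra.
Qed.

Lemma tail_all t N :
  Rabs (Lt t - psum (tg_alt (gtm t)) N) <= / an N + 6 * (t^2 / (t^2 + an N ^2)).
Proof.
  pose proof (an_pos N) as HaN.
  assert (H6 : 0 <= 6 * (t^2 / (t^2 + an N ^2))).
  { apply Rmult_le_pos. lra. apply Rmult_le_pos. nra. apply Rlt_le, Rinv_0_lt_compat. nra. }
  assert (Hi : 0 < / an N) by (apply Rinv_0_lt_compat; lra).
  destruct (Rle_dec (Rabs t) (an N)) as [Hs|Hb].
  - pose proof (tail_small t N Hs). lra.
  - apply Rnot_le_lt in Hb.
    assert (Ht : 0 < Rabs t) by lra.
    pose proof (psum_bound t N Ht).
    assert (INR N / (2 * Rabs t) <= 1).
    { apply Rmult_le_reg_l with (2 * Rabs t). lra. field_simplify. 2: lra.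
      unfold an in Hb. lra. }
    assert (3 <= 6 * (t^2 / (t^2 + an N ^2))).
    { assert (an N ^2 <= t^2).
      { rewrite <- (pow2_abs t). apply pow_incr. lra. }
      apply Rmult_le_reg_l with (t^2 + an N^2). nra.
      field_simplify; try (intro; nra); try nra. }
    pose proof (Lt_bound t).
    eapply Rle_trans. apply Rabs_triang. rewrite Rabs_Ropp.
    rewrite (Rabs_right (Lt t)) by lra. lra.
Qed.


Definition Fm := Rbar_locally m_infty.
Definition Fp := Rbar_locally p_infty.

Lemma RIG_antider (f A : R -> R) (la lb : R) :
  (forall x, is_derive A x (f x)) -> (forall x, continuous f x) ->
  is_lim A m_infty la -> is_lim A p_infty lb ->
  is_RInt_gen f Fm Fp (lb - la).
Proof.
  intros HD HC Hm Hp.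
  assert (HDe : forall x, Derive A x = f x) by (intros; apply is_derive_unique, HD).
  apply (is_RInt_gen_ext (Derive A)).
  { apply filter_forall. intros ab x _. apply HDe. }
  apply is_RInt_gen_Derive.
  - apply filter_forall. intros ab x _. eexists. apply HD.
  - apply filter_forall. intros ab x _. eapply continuous_ext.
    intros y. symmetry. apply HDe. apply HC.
  - exact Hm.
  - exact Hp.
Qed.

Lemma atan_lim_p : is_lim atan p_infty (PI/2).
Proof.
  apply is_lim_ext_loc with (f := fun x => PI/2 - atan (/ x)).
  { exists 0. intros x Hx. rewrite atan_inv by lra. ring. }
  assert (H : is_lim (fun x => PI/2 - atan (/ x)) p_infty (PI/2 - atan 0)).
  { apply is_lim_minus'. apply is_lim_const.
    apply (is_lim_comp_continuous (fun x => / x) atan p_infty 0).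
    - replace (Finite 0) with (Rbar_inv p_infty) by auto.
      apply is_lim_inv. apply is_lim_id. discriminate.
    - apply continuous_atan. }
  rewrite atan_0, Rminus_0_r in H. exact H.
Qed.

Lemma atan_lim_m : is_lim atan m_infty (- (PI/2)).
Proof.
  apply is_lim_ext with (f := fun x => - atan (- x)).
  { intros x. rewrite atan_opp. ring. }
  replace (Finite (- (PI/2))) with (Rbar_opp (PI/2)) by auto.
  apply is_lim_opp.
  apply (is_lim_comp atan (fun x => - x) m_infty (PI/2) p_infty).
  - apply atan_lim_p.
  - replace p_infty with (Rbar_opp m_infty) by auto. apply is_lim_opp, is_lim_id.
  - exists 0. intros x _. discriminate.
Qed.

Lemma atan_div_lim_p c : 0 < c -> is_lim (fun x => atan (x / c)) p_infty (PI/2).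
Proof.
  intros Hc.
  apply (is_lim_comp atan (fun x => x / c) p_infty (PI/2) p_infty).
  - apply atan_lim_p.
  - replace p_infty with (Rbar_mult p_infty (/ c)) at 2.
    apply is_lim_scal_r, is_lim_id.
    simpl. destruct (Rle_dec 0 (/c)) as [H|H]. destruct (Rle_lt_or_eq_dec 0 (/c) H) as [H'|H'].
    auto. exfalso. pose proof (Rinv_0_lt_compat c Hc). lra.
    exfalso. pose proof (Rinv_0_lt_compat c Hc). lra.
  - exists 0. intros x _. discriminate.
Qed.

Lemma atan_div_lim_m c : 0 < c -> is_lim (fun x => atan (x / c)) m_infty (- (PI/2)).
Proof.
  intros Hc.
  apply (is_lim_comp atan (fun x => x / c) m_infty (- (PI/2)) m_infty).
  - apply atan_lim_m.
  - replace m_infty with (Rbar_mult m_infty (/ c)) at 2.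
    apply is_lim_scal_r, is_lim_id.
    simpl. destruct (Rle_dec 0 (/c)) as [H|H]. destruct (Rle_lt_or_eq_dec 0 (/c) H) as [H'|H'].
    auto. exfalso. pose proof (Rinv_0_lt_compat c Hc). lra.
    exfalso. pose proof (Rinv_0_lt_compat c Hc). lra.
  - exists 0. intros x _. discriminate.
Qed.

Lemma inv_lim_p : is_lim (fun y => / y) p_infty 0.
Proof. replace (Finite 0) with (Rbar_inv p_infty) by auto. apply is_lim_inv. apply is_lim_id. discriminate. Qed.
Lemma inv_lim_m : is_lim (fun y => / y) m_infty 0.
Proof. replace (Finite 0) with (Rbar_inv m_infty) by auto. apply is_lim_inv. apply is_lim_id. discriminate. Qed.

Lemma rat_lim_p a : 0 < a -> is_lim (fun l => l / (l^2 + a^2)) p_infty 0.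
Proof.
  intros Ha. apply (is_lim_le_le_loc (fun _ => 0) (fun y => / y)).
  - exists 0. intros y Hy. split.
    + apply Rmult_le_pos. lra. apply Rlt_le, Rinv_0_lt_compat. nra.
    + apply Rmult_le_reg_l with (y * (y^2 + a^2)). apply Rmult_lt_0_compat; nra.
      field_simplify; try (intro; nra). nra.
  - apply is_lim_const.
  - apply inv_lim_p.
Qed.

Lemma rat_lim_m a : 0 < a -> is_lim (fun l => l / (l^2 + a^2)) m_infty 0.
Proof.
  intros Ha. apply (is_lim_le_le_loc (fun y => / y) (fun _ => 0)).
  - exists 0. intros y Hy. split.
    + assert (E : y / (y^2 + a^2) - / y = a^2 / ((- y) * (y^2 + a^2))) by (field; split; nra).
      assert (0 <= a^2 / ((- y) * (y^2 + a^2))).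
      { apply Rmult_le_pos. nra. apply Rlt_le, Rinv_0_lt_compat. apply Rmult_lt_0_compat; nra. }
      lra.
    + assert (E : y / (y^2 + a^2) = - ((- y) / (y^2 + a^2))) by (field; nra).
      assert (0 <= (- y) / (y^2 + a^2)).
      { apply Rmult_le_pos. lra. apply Rlt_le, Rinv_0_lt_compat. nra. }
      lra.
  - apply inv_lim_m.
  - apply is_lim_const.
Qed.

Lemma term_int a x : 0 < a -> 0 < x ->
  is_RInt_gen (fun l => a / (a^2 + l^2) * (2*x/(l^2+x^2))) Fm Fp (2*PI/(a + x)).
Proof.
  intros Ha Hx.
  assert (HC : forall l, continuous (fun l => a / (a^2 + l^2) * (2*x/(l^2+x^2))) l).
  { intros l. apply (@ex_derive_continuous R_AbsRing R_NormedModule). auto_derive.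
    split. nra. split. nra. auto. }
  destruct (Req_dec a x) as [<-|Hax].
  - replace (2*PI/(a+a)) with ((PI/2)/a - (-(PI/2))/a) by (field; lra).
    apply (RIG_antider _ (fun l => l / (l^2 + a^2) + atan (l/a) / a)); auto.
    + intros l. auto_derive. intro; nra.
      field. repeat split; try lra; try (intro; nra).
    + replace ((-(PI/2))/a) with (0 + (-(PI/2))/a) by ring.
      apply is_lim_plus'. apply rat_lim_m; auto.
      apply (is_lim_scal_r (fun l => atan (l/a)) (/a) m_infty (-(PI/2))). apply atan_div_lim_m; auto.
    + replace ((PI/2)/a) with (0 + (PI/2)/a) by ring.
      apply is_lim_plus'. apply rat_lim_p; auto.
      apply (is_lim_scal_r (fun l => atan (l/a)) (/a) p_infty (PI/2)). apply atan_div_lim_p; auto.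
  - assert (Hd : x^2 - a^2 <> 0).
    { intro H. assert ((x - a) * (x + a) = 0) by (rewrite <- H; ring).
      apply Rmult_integral in H0. destruct H0; lra. }
    replace (2*PI/(a+x)) with ((2/(x^2-a^2)) * (x * (PI/2) - a * (PI/2))
                               - (2/(x^2-a^2)) * (x * (-(PI/2)) - a * (-(PI/2)))).
    2: { field. split. lra. auto. }
    apply (RIG_antider _ (fun l => (2/(x^2-a^2)) * (x * atan (l/a) - a * atan (l/x)))); auto.
    + intros l. auto_derive. repeat split; try lra; try (intro; nra).
      field. repeat split; try lra; try (intro; nra); auto.
    + apply (is_lim_scal_l _ (2/(x^2-a^2)) m_infty (x * (-(PI/2)) - a * (-(PI/2)))).
      apply is_lim_minus'.
      apply (is_lim_scal_l _ x m_infty (-(PI/2))). apply atan_div_lim_m; auto.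
      apply (is_lim_scal_l _ a m_infty (-(PI/2))). apply atan_div_lim_m; auto.
    + apply (is_lim_scal_l _ (2/(x^2-a^2)) p_infty (x * (PI/2) - a * (PI/2))).
      apply is_lim_minus'.
      apply (is_lim_scal_l _ x p_infty (PI/2)). apply atan_div_lim_p; auto.
      apply (is_lim_scal_l _ a p_infty (PI/2)). apply atan_div_lim_p; auto.
Qed.

Ltac req := match goal with |- ?a = ?b => change (@eq R a b) end.

Definition fpos (x l : R) := 2 * x / (l^2 + x^2).
Definition Gapp (N : nat) (x l : R) := psum (tg_alt (gtm l)) N / PI * fpos x l.
Definition Wapp (N : nat) (x : R) := psum (fun n => (-1)^n * (2 / (an n + x))) N.

Lemma Gapp_int N x : 0 < x -> is_RInt_gen (Gapp N x) Fm Fp (Wapp N x).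
Proof.
  intros Hx. induction N.
  - pose proof (is_RInt_gen_scal _ 0 _ (term_int 1 x Rlt_0_1 Hx)) as H.
    eapply is_RInt_gen_ext in H.
    2: { apply filter_forall. intros ab y _. unfold Gapp. simpl. change (scal 0 ?z) with (0 * z).
         instantiate (1 := Gapp 0 x). unfold Gapp. simpl. unfold Rdiv. rewrite !Rmult_0_l. reflexivity. }
    unfold Wapp. simpl. change (scal 0 ?z) with (0 * z) in H. rewrite Rmult_0_l in H. exact H.
  - pose proof (is_RInt_gen_scal _ ((-1)^N / PI) _ (term_int (an N) x (an_pos N) Hx)) as H.
    pose proof (is_RInt_gen_plus _ _ _ _ IHN H) as H2.
    eapply is_RInt_gen_ext in H2.
    2: { apply filter_forall. intros ab y _. instantiate (1 := Gapp (S N) x).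
         unfold Gapp, fpos. rewrite psum_S. change (scal ?k ?z) with (k * z). change (plus ?u ?v) with (u + v).
         req. unfold gtm, tg_alt. pose proof PI_RGT_0. pose proof (an_pos N). field. repeat split; try lra; try (intro; nra). }
    replace (Wapp (S N) x) with (plus (Wapp N x) (scal ((-1)^N / PI) (2 * PI / (an N + x)))).
    exact H2.
    unfold Wapp. rewrite psum_S. change (scal ?k ?z) with (k * z). change (plus ?u ?v) with (u + v).
    req. pose proof PI_RGT_0. pose proof (an_pos N). field. lra.
Qed.

Lemma sigma0_Lt l : sigma0 l = Lt l / PI.
Proof. unfold sigma0, Lt. pose proof PI_RGT_0. pose proof (cosh_ge1 (PI*l)). field. split; lra. Qed.

Lemma fpos_pos x l : 0 < x -> 0 < fpos x l.
Proof. intros. unfold fpos. apply Rdiv_lt_0_compat; nra. Qed.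

Lemma sigf_cont x l : 0 < x -> continuous (fun l => sigma0 l * fpos x l) l.
Proof.
  intros Hx. apply (@ex_derive_continuous R_AbsRing R_NormedModule).
  unfold sigma0, cosh, fpos. auto_derive.
  pose proof (exp_pos (PI*l)). pose proof (exp_pos (-(PI*l))).
  repeat split; try (intro; nra).
Qed.

Lemma diff_bound x N a b yG : 0 < x -> a <= b -> is_RInt (Gapp N x) a b yG ->
  Rabs (RInt (fun l => sigma0 l * fpos x l) a b - yG) <= (2 + 12*x) / an N.
Proof.
  intros Hx Hab HG.
  pose proof (an_pos N) as HA. set (A := an N) in *.
  pose proof PI_RGT_0 as HPI.
  assert (Hs : is_RInt (fun l => sigma0 l * fpos x l) a b (RInt (fun l => sigma0 l * fpos x l) a b)).
  { apply (@RInt_correct R_CompleteNormedModule), (@ex_RInt_continuous R_CompleteNormedModule). intros z _. apply sigf_cont; auto. }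
  pose proof (is_RInt_minus _ _ _ _ _ _ Hs HG) as Hd.
  set (g := fun l => / PI * (/ A * fpos x l + 12 * x / (l^2 + A^2))).
  set (H := fun l => / PI * (/ A * (2 * atan (l/x)) + 12 * x / A * atan (l/A))).
  assert (Hg : is_RInt g a b (minus (H b) (H a))).
  { apply (@is_RInt_derive R_CompleteNormedModule).
    - intros l _. unfold H, g, fpos. auto_derive. repeat split; try lra.
      field. repeat split; try lra; try (intro; nra).
    - intros l _. apply (@ex_derive_continuous R_AbsRing R_NormedModule).
      unfold g, fpos. auto_derive. repeat split; try lra; try (intro; nra). }
  assert (Hpt : forall l, a <= l <= b -> norm (minus (sigma0 l * fpos x l) (Gapp N x l)) <= g l).
  { intros l _. change (norm ?z) with (Rabs z). change (minus ?u ?v) with (u - v).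
    unfold Gapp. rewrite sigma0_Lt.
    replace (Lt l / PI * fpos x l - psum (tg_alt (gtm l)) N / PI * fpos x l)
      with ((Lt l - psum (tg_alt (gtm l)) N) * (/ PI * fpos x l)) by (field; lra).
    pose proof (fpos_pos x l Hx).
    rewrite Rabs_mult, (Rabs_right (/ PI * fpos x l)).
    2: { apply Rle_ge, Rmult_le_pos. apply Rlt_le, Rinv_0_lt_compat; lra. lra. }
    pose proof (tail_all l N) as Ht. fold A in Ht.
    eapply Rle_trans. apply Rmult_le_compat_r. 2: exact Ht.
    apply Rmult_le_pos. apply Rlt_le, Rinv_0_lt_compat; lra. lra.
    unfold g.
    assert (Hk : 6 * (l^2 / (l^2 + A^2)) * fpos x l <= 12 * x / (l^2 + A^2)).
    { unfold fpos.
      replace (6 * (l ^ 2 / (l ^ 2 + A ^ 2)) * (2 * x / (l ^ 2 + x ^ 2)))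
        with (12 * x / (l^2 + A^2) * (l^2 / (l^2 + x^2))) by (field; split; nra).
      rewrite <- (Rmult_1_r (12 * x / (l^2 + A^2))) at 2.
      apply Rmult_le_compat_l. apply Rmult_le_pos. lra. apply Rlt_le, Rinv_0_lt_compat; nra.
      apply Rmult_le_reg_r with (l^2 + x^2). nra. field_simplify; try (intro; nra). nra. }
    assert (E : (/ A + 6 * (l^2 / (l^2 + A^2))) * (/ PI * fpos x l)
              = / PI * (/ A * fpos x l + 6 * (l^2 / (l^2 + A^2)) * fpos x l)) by ring.
    rewrite E. apply Rmult_le_compat_l. apply Rlt_le, Rinv_0_lt_compat; lra. lra. }
  pose proof (norm_RInt_le _ g a b _ _ Hab Hpt Hd Hg) as Hn.
  change (norm ?z) with (Rabs z) in Hn. change (minus ?u ?v) with (u - v) in Hn.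
  eapply Rle_trans. exact Hn.
  unfold H.
  pose proof (atan_bound (b/x)). pose proof (atan_bound (a/x)).
  pose proof (atan_bound (b/A)). pose proof (atan_bound (a/A)).
  assert (atan (a/x) <= atan (b/x)).
  { destruct (Req_dec a b). subst; lra. left. apply atan_increasing. unfold Rdiv. apply Rmult_lt_compat_r.
    apply Rinv_0_lt_compat; lra. lra. }
  assert (atan (a/A) <= atan (b/A)).
  { destruct (Req_dec a b). subst; lra. left. apply atan_increasing. unfold Rdiv. apply Rmult_lt_compat_r.
    apply Rinv_0_lt_compat; lra. lra. }
  replace (/ PI * (/ A * (2 * atan (b / x)) + 12 * x / A * atan (b / A)) -
   / PI * (/ A * (2 * atan (a / x)) + 12 * x / A * atan (a / A)))
   with (/ PI * / A * (2 * (atan (b/x) - atan (a/x)) + 12 * x * (atan (b/A) - atan (a/A)))) by (field; lra).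
  replace ((2 + 12 * x) / A) with (/ PI * / A * (2 * PI + 12 * x * PI)) by (field; lra).
  apply Rmult_le_compat_l. apply Rmult_le_pos; apply Rlt_le, Rinv_0_lt_compat; lra.
  assert (12 * x * (atan (b/A) - atan (a/A)) <= 12 * x * PI) by (apply Rmult_le_compat_l; lra).
  lra.
Qed.

Lemma main_gen x V : 0 < x ->
  (forall eps, 0 < eps -> exists N, (2 + 12*x)/an N < eps /\ Rabs (Wapp N x - V) < eps) ->
  is_RInt_gen (fun l => sigma0 l * fpos x l) Fm Fp V.
Proof.
  intros Hx Happ. unfold is_RInt_gen, filterlimi, filter_le, filtermapi.
  intros P [eps HP].
  assert (He3 : 0 < eps / 3) by (pose proof (cond_pos eps); lra).
  destruct (Happ (eps/3) He3) as [N [H1 H2]].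
  pose proof (Gapp_int N x Hx) as HG. unfold is_RInt_gen, filterlimi, filter_le, filtermapi in HG.
  specialize (HG (ball (Wapp N x) (mkposreal _ He3)) (locally_ball _ _)).
  assert (Hab : filter_prod Fm Fp (fun ab : R * R => fst ab <= snd ab)).
  { apply (Filter_prod _ _ _ (fun a => a < 0) (fun b => 0 < b)).
    exists 0. auto. exists 0. auto. intros; simpl; lra. }
  eapply filter_imp. 2: exact (filter_and _ _ HG Hab).
  intros [a b] [[yG [HyG Hball]] Hle]. simpl in *.
  exists (RInt (fun l => sigma0 l * fpos x l) a b). split.
  { apply (@RInt_correct R_CompleteNormedModule), (@ex_RInt_continuous R_CompleteNormedModule).
    intros z _. apply sigf_cont; auto. }
  apply HP. change (Rabs (RInt (fun l => sigma0 l * fpos x l) a b - V) < eps).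
  change (Rabs (yG - Wapp N x) < eps/3) in Hball.
  pose proof (diff_bound x N a b yG Hx Hle HyG).
  pose proof (Rabs_triang (RInt (fun l => sigma0 l * fpos x l) a b - yG) (yG - V)).
  pose proof (Rabs_triang (yG - Wapp N x) (Wapp N x - V)).
  replace (RInt (fun l => sigma0 l * fpos x l) a b - yG + (yG - V)) with (RInt (fun l => sigma0 l * fpos x l) a b - V) in H0 by ring.
  replace (yG - Wapp N x + (Wapp N x - V)) with (yG - V) in H3 by ring.
  lra.
Qed.


Lemma ex_series_dig c : 0 < c -> ex_series (fun n => / (INR n + 1) - / (INR n + c)).
Proof.
  intros Hc. set (m := Rmin 1 c).
  assert (Hm : 0 < m) by (unfold m; apply Rmin_glb_lt; lra).
  assert (Hm1 : m <= 1) by apply Rmin_l. assert (Hmc : m <= c) by apply Rmin_r.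
  apply (@ex_series_le R_AbsRing R_CompleteNormedModule _ (fun n => (Rabs (c - 1) / m) * / (INR n + 1)^2)).
  - intros n. change (norm ?z) with (Rabs z). pose proof (pos_INR n).
    replace (/ (INR n + 1) - / (INR n + c)) with ((c - 1) * / ((INR n + 1) * (INR n + c))) by (field; lra).
    rewrite Rabs_mult, (Rabs_right (/ ((INR n + 1) * (INR n + c)))).
    2: { apply Rle_ge, Rlt_le, Rinv_0_lt_compat. nra. }
    unfold Rdiv. rewrite Rmult_assoc. apply Rmult_le_compat_l. apply Rabs_pos.
    rewrite <- Rinv_mult.
    apply Rinv_le_contravar. nra.
    assert (m * (INR n + 1) <= INR n + c) by nra.
    nra.
  - apply (@ex_series_scal_l R_AbsRing R_NormedModule (Rabs (c-1)/m) (fun n => / (INR n + 1)^2)).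
    apply ex_series_inv_sq.
Qed.

Definition wser (x : R) (n : nat) := / (INR n + (x/2 + /4)) - / (INR n + (x/2 + 3/4)).

Lemma V_series x : 0 < x ->
  digamma (x/2 + 3/4) - digamma (x/2 + /4) = Series (wser x).
Proof.
  intros Hx. unfold digamma.
  assert (E : forall c, (fun n => / (INR n + 1) - / (INR n + c)) = (fun n => / (INR n + 1) - / (INR n + c))) by auto.
  replace (- euler_gamma + Series (fun n => / (INR n + 1) - / (INR n + (x/2 + 3/4))) -
           (- euler_gamma + Series (fun n => / (INR n + 1) - / (INR n + (x/2 + /4)))))
    with (Series (fun n => / (INR n + 1) - / (INR n + (x/2 + 3/4))) -
          Series (fun n => / (INR n + 1) - / (INR n + (x/2 + /4)))) by ring.
  rewrite <- Series_minus.
  - apply Series_ext. intros n. unfold wser. ring.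
  - apply ex_series_dig. lra.
  - apply ex_series_dig. lra.
Qed.

Lemma Wapp_even x M : 0 < x -> Wapp (2 * M) x = psum (wser x) M.
Proof.
  intros Hx. induction M.
  - reflexivity.
  - replace (2 * S M)%nat with (S (S (2 * M))) by lia.
    unfold Wapp in *. rewrite !psum_S, IHM.
    unfold wser. change ((-1)^(S (2*M))) with (-1 * (-1)^(2*M)). replace ((-1)^(2*M)) with 1.
    2: { rewrite pow_mult. replace ((-1)^2) with 1 by ring. rewrite pow1. reflexivity. }
    unfold an. rewrite S_INR, mult_INR. simpl. pose proof (pos_INR M).
    field. split; lra.
Qed.

Lemma approx x : 0 < x -> forall eps, 0 < eps -> exists N,
  (2 + 12*x)/an N < eps /\ Rabs (Wapp N x - (digamma (x/2 + 3/4) - digamma (x/2 + /4))) < eps.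
Proof.
  intros Hx eps He.
  rewrite V_series by auto.
  set (V := Series (wser x)).
  assert (HS : is_lim_seq (sum_n (wser x)) V).
  { apply (Series_correct (wser x)).
    replace (wser x) with (fun n => (/ (INR n + 1) - / (INR n + (x/2 + 3/4))) - (/ (INR n + 1) - / (INR n + (x/2 + /4)))).
    apply (@ex_series_minus R_AbsRing R_NormedModule). apply ex_series_dig; lra. apply ex_series_dig; lra.
    apply FunctionalExtensionality.functional_extensionality. intros n. unfold wser. ring. }
  apply is_lim_seq_spec in HS. specialize (HS (mkposreal _ He)). simpl in HS.
  pose proof is_lim_seq_INR as HI. apply is_lim_seq_spec in HI.
  specialize (HI ((2 + 12*x)/eps)).
  destruct (filter_and _ _ HS HI) as [N0 HN0].
  destruct (HN0 N0 (le_n _)) as [Hs Hi].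
  exists (2 * S N0)%nat. split.
  - assert (HaN : INR N0 < an (2 * S N0)).
    { unfold an. rewrite mult_INR, !S_INR. simpl (INR 0). pose proof (pos_INR N0). lra. }
    pose proof (an_pos (2 * S N0)) as Hp.
    assert (Hk : 2 + 12*x < eps * an (2 * S N0)).
    { replace (2 + 12*x) with (eps * ((2 + 12*x)/eps)) by (field; lra).
      apply Rmult_lt_compat_l; lra. }
    apply Rmult_lt_reg_r with (an (2*S N0)). lra.
    unfold Rdiv. rewrite Rmult_assoc, Rinv_l, Rmult_1_r by lra. lra.
  - rewrite Wapp_even by auto. simpl psum. rewrite <- sum_n_Reals. exact Hs.
Qed.


Lemma key_pos x : 0 < x ->
  is_RInt_gen (fun l => sigma0 l * fx x l) Fm Fp (digamma (x/2 + 3/4) - digamma (x/2 + /4)).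
Proof.
  intros Hx. apply (is_RInt_gen_ext (fun l => sigma0 l * fpos x l)).
  { apply filter_forall. intros ab l _. unfold fx, fpos. destruct (Req_EM_T x 0). lra. reflexivity. }
  apply main_gen. auto. apply approx. auto.
Qed.

Lemma zero_int : is_RInt_gen (fun _ => 0) Fm Fp 0.
Proof.
  pose proof (is_RInt_gen_scal _ 0 _ (key_pos 1 Rlt_0_1)) as H.
  change (scal 0 ?z) with (0 * z) in H. rewrite Rmult_0_l in H.
  eapply is_RInt_gen_ext. 2: exact H.
  apply filter_forall. intros ab l _. change (scal 0 ?z) with (0 * z). apply Rmult_0_l.
Qed.

Definition hh (y : R) := digamma (Rabs y / 2 + /2).

Lemma key_Z (m : Z) :
  is_RInt_gen (fun l => sigma0 l * fx (IZR m / 2) l) Fm Fp (hh (IZR m / 2 + /2) - hh (IZR m / 2 - /2)).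
Proof.
  set (x := IZR m / 2).
  destruct (Z.lt_trichotomy m 0) as [Hm|[Hm|Hm]].
  - assert (Hm' : IZR m <= -1) by (apply IZR_le; lia).
    assert (Hx : 0 < - x) by (unfold x; lra).
    pose proof (is_RInt_gen_opp _ _ (key_pos (- x) Hx)) as H.
    eapply is_RInt_gen_ext in H.
    2: { apply filter_forall. intros ab l _. change (opp ?z) with (- z).
         instantiate (1 := fun l => sigma0 l * fx x l). simpl.
         unfold fx. destruct (Req_EM_T (- x) 0); destruct (Req_EM_T x 0); try lra.
         field; repeat split; try (intro; nra). }
    change (opp ?z) with (- z) in H.
    replace (hh (x + /2) - hh (x - /2)) with (- (digamma (- x / 2 + 3 / 4) - digamma (- x / 2 + / 4))).
    exact H.
    unfold hh. rewrite (Rabs_left1 (x + /2)) by (unfold x; lra).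
    rewrite (Rabs_left1 (x - /2)) by (unfold x; lra).
    replace (- (x + /2) / 2 + /2) with (- x / 2 + / 4) by field.
    replace (- (x - /2) / 2 + /2) with (- x / 2 + 3 / 4) by field. ring.
  - subst m. unfold x. replace (IZR 0 / 2) with 0 by (simpl; field).
    unfold hh. rewrite Rplus_0_l, Rminus_0_l, Rabs_Ropp, Rminus_diag.
    eapply is_RInt_gen_ext. 2: exact zero_int.
    apply filter_forall. intros ab l _. unfold fx. destruct (Req_EM_T 0 0). symmetry. apply Rmult_0_r. lra.
  - assert (Hm' : 1 <= IZR m) by (apply IZR_le; lia).
    assert (Hx : 0 < x) by (unfold x; lra).
    replace (hh (x + /2) - hh (x - /2)) with (digamma (x / 2 + 3 / 4) - digamma (x / 2 + / 4)).
    apply key_pos; auto.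
    unfold hh. rewrite (Rabs_right (x + /2)) by (unfold x; lra).
    rewrite (Rabs_right (x - /2)) by (unfold x; lra).
    replace ((x + /2) / 2 + /2) with (x / 2 + 3 / 4) by field.
    replace ((x - /2) / 2 + /2) with (x / 2 + / 4) by field. ring.
Qed.


Definition Xk (t' twos k : nat) : R := - half t' + / 2 + INR k + INR twos / 2.

Lemma Xk_Z t' twos k :
  Xk t' twos k = IZR (Z.of_nat twos + 2 * Z.of_nat k + 1 - Z.of_nat t') / 2.
Proof.
  unfold Xk, half. rewrite minus_IZR, !plus_IZR, mult_IZR, <- !INR_IZR_INZ. simpl. field.
Qed.

Lemma list_int t' twos (l : list nat) :
  is_RInt_gen (fun lam => sigma0 lam * lsum (fun k => fx (Xk t' twos k) lam) l) Fm Fp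
    (lsum (fun k => hh (Xk t' twos k + /2) - hh (Xk t' twos k - /2)) l).
Proof.
  induction l as [|k l IH].
  - simpl. eapply is_RInt_gen_ext. 2: exact zero_int.
    apply filter_forall. intros ab y _. symmetry. apply Rmult_0_r.
  - simpl. pose proof (key_Z (Z.of_nat twos + 2 * Z.of_nat k + 1 - Z.of_nat t')) as HK.
    rewrite <- Xk_Z in HK.
    pose proof (is_RInt_gen_plus _ _ _ _ HK IH) as H2.
    eapply is_RInt_gen_ext. 2: exact H2.
    apply filter_forall. intros ab y _. change (plus ?u ?v) with (u + v).
    unfold lsum. simpl. ring.
Qed.

Lemma telesc t' twos s n :
  lsum (fun k => hh (Xk t' twos k + /2) - hh (Xk t' twos k - /2)) (seq s n)
  = hh (Xk t' twos (s + n) - /2) - hh (Xk t' twos s - /2).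
Proof.
  revert s. induction n; intros s.
  - simpl. rewrite Nat.add_0_r. unfold lsum. simpl. ring.
  - simpl. unfold lsum in *. simpl. rewrite IHn.
    replace (Xk t' twos (S s) - /2) with (Xk t' twos s + /2) by (unfold Xk; rewrite S_INR; field).
    rewrite Nat.add_succ_r. simpl. ring.
Qed.

Lemma Psi_int t' twos :
  is_RInt_gen (fun lam => sigma0 lam * Psi t' twos lam) Fm Fp
    (digamma ((half t' + half twos + 1) / 2) - digamma ((Rabs (half t' - half twos) + 1) / 2)).
Proof.
  pose proof (list_int t' twos (seq 0 t')) as H.
  rewrite telesc in H. simpl in H.
  replace (digamma ((half t' + half twos + 1) / 2) - digamma ((Rabs (half t' - half twos) + 1) / 2))
    with (hh (Xk t' twos t' - /2) - hh (Xk t' twos 0 - /2)).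
  - eapply is_RInt_gen_ext. 2: exact H.
    apply filter_forall. intros ab y _. reflexivity.
  - unfold hh.
    replace (Xk t' twos t' - /2) with (half t' + half twos) by (unfold Xk, half; field).
    replace (Xk t' twos 0 - /2) with (half twos - half t') by (unfold Xk, half; simpl; field).
    assert (0 <= half t') by (unfold half; pose proof (pos_INR t'); lra).
    assert (0 <= half twos) by (unfold half; pose proof (pos_INR twos); lra).
    rewrite (Rabs_right (half t' + half twos)) by lra.
    rewrite Rabs_minus_sym.
    f_equal; f_equal; field.
Qed.

Lemma lsum_ext {A} (F G : A -> R) l : (forall a, F a = G a) -> lsum F l = lsum G l.
Proof. intros H. induction l; unfold lsum in *; simpl; auto. rewrite H, IHl. auto. Qed.

Theorem theorem5p1 (S : list nat) (rho : nat -> R) :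
  S <> nil ->
  NoDup S ->
  (forall n, In n S -> (0 < n)%nat) ->
  (forall n, In n S -> 0 < rho n) ->
  lsum rho S = 1 ->
  forall twos : nat, In twos S ->
    E0 S rho twos =
    - lsum (fun twos' => rho twos' *
        (digamma ((half twos' + half twos + 1) / 2)
         - digamma ((Rabs (half twos' - half twos) + 1) / 2))) S.
Proof.
  intros _ _ _ _ _ twos _. unfold E0. f_equal. apply lsum_ext. intros t'.
  f_equal. unfold integral_R. apply is_RInt_gen_unique. apply Psi_int.
Qed.
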